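(* Let $L$ be a Lelek fan with top $v$, let $W$ be a wedge in $L$, and let $L'\subseteq L$ be a subcontinuum that is a Lelek fan such that 1. $L'\cap W$ is a Lelek fan, and 2. there is a Cantor fan $C$ with $L'\cap W\subseteq C\subseteq W$. Then there is no retraction from $L$ onto $L'$.
   Context: A continuum is a nonempty compact connected metric space. A dendroid is an arcwise connected, hereditarily unicoherent continuum. A point $x$ of a dendroid $X$ is a ramification point if $x$ is the top (the branch point) of some simple triod in $X$. A fan is a dendroid with at most one ramification point; this point, if it exists, is called the top of the fan. For a fan $X$, a point $x$ is an end point of $X$ if $x$ is an end point of every arc in $X$ containing $x$; $E(X)$ denotes the set of end points of $X$. A fan $X$ with top $v$ is smooth if for every $x\in X$ and every sequence $x_n\to x$ in $X$, the arcs from $v$ to $x_n$ converge (in the Hausdorff metric) to the arc from $v$ to $x$. A Lelek fan is a smooth fan $X$ with $\mathrm{Cl}(E(X))=X$. A Cantor fan is a continuum homeomorphic to $\bigcup_{c\in C}A_c\subseteq\mathbb R^2$, where $C\subseteq[0,1]$ is the Cantor middle-third set and $A_c$ is the straight segment from $(\tfrac12,0)$ to $(c,1)$. If $L$ is a Lelek fan with top $v$, a subcontinuum $W\subseteq L$ is a wedge in $L$ if both $W$ and $(L\setminus W)\cup\{v\}$ are Lelek fans. A retraction from a space $X$ onto a subspace $Y$ is a continuous map $r:X\to Y$ with $r(y)=y$ for all $y\in Y$. *)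

(* Defs.v *)
From HB Require Import structures.
From mathcomp Require Import all_boot all_order all_algebra.
From mathcomp Require Import all_classical all_reals.
From mathcomp Require Import topology normedtype.
Set Implicit Arguments. Unset Strict Implicit. Unset Printing Implicit Defensive.
Import Order.TTheory GRing.Theory Num.Theory.
Import numFieldNormedType.Exports.
Local Open Scope classical_set_scope.
Local Open Scope ring_scope.

Section Fans.
Variable R : realType.

Definition homeo_sets {S U : topologicalType} (A : set S) (B : set U)
  (f : S -> U) (g : U -> S) : Prop :=
  [/\ {within A, continuous f}, {within B, continuous g},
      f @` A `<=` B, g @` B `<=` A &
      (forall x, A x -> g (f x) = x) /\ (forall y, B y -> f (g y) = y)].

Definition homeomorphic {S U : topologicalType} (A : set S) (B : set U) : Prop :=
  exists f g, homeo_sets A B f g.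

Variable T : pseudoMetricType R.

Definition arc_from (A : set T) (x y : T) : Prop :=
  exists (f : R -> T) (g : T -> R),
    homeo_sets (`[0, 1] : set R) A f g /\ f 0 = x /\ f 1 = y.

Definition arc (A : set T) : Prop := exists x y, arc_from A x y.

Definition arc_endpoint (A : set T) (x : T) : Prop := exists y, arc_from A x y.

Definition continuum (X : set T) : Prop :=
  X !=set0 /\ compact X /\ connected X.

Definition arcwise_connected (X : set T) : Prop :=
  forall x y, X x -> X y -> x <> y -> exists A, A `<=` X /\ arc_from A x y.

Definition hereditarily_unicoherent (X : set T) : Prop :=
  forall A B, A `<=` X -> B `<=` X -> continuum A -> continuum B ->
    connected (A `&` B).

Definition dendroid (X : set T) : Prop :=
  [/\ continuum X, arcwise_connected X & hereditarily_unicoherent X].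

Definition ramification_point (X : set T) (x : T) : Prop :=
  exists (A1 A2 A3 : set T) (y1 y2 y3 : T),
    [/\ A1 `|` A2 `|` A3 `<=` X,
        arc_from A1 x y1, arc_from A2 x y2, arc_from A3 x y3 &
        [/\ A1 `&` A2 = [set x], A1 `&` A3 = [set x] & A2 `&` A3 = [set x]]].

Definition fan (X : set T) : Prop :=
  dendroid X /\
  (forall x y, ramification_point X x -> ramification_point X y -> x = y).

Definition end_points (X : set T) : set T :=
  [set x | X x /\ forall A, A `<=` X -> arc A -> A x -> arc_endpoint A x].

Definition arc_in_from (X : set T) (v x : T) (B : set T) : Prop :=
  B `<=` X /\ ((x = v /\ B = [set v]) \/ (x <> v /\ arc_from B v x)).

Definition hausdorff_cvg (Bs : nat -> set T) (B : set T) : Prop :=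
  forall e : R, 0 < e -> \forall n \near \oo,
    (forall y, Bs n y -> exists z, B z /\ ball z e y) /\
    (forall z, B z -> exists y, Bs n y /\ ball z e y).

Definition smooth_fan (X : set T) (v : T) : Prop :=
  fan X /\
  forall (x : T) (u : nat -> T) (B : set T) (Bs : nat -> set T),
    X x -> (forall n, X (u n)) -> u @ \oo --> x ->
    arc_in_from X v x B -> (forall n, arc_in_from X v (u n) (Bs n)) ->
    hausdorff_cvg Bs B.

Definition lelek_fan_top (X : set T) (v : T) : Prop :=
  [/\ smooth_fan X v, ramification_point X v & closure (end_points X) = X].

Definition lelek_fan (X : set T) : Prop := exists v, lelek_fan_top X v.

Definition wedge (L W : set T) (v : T) : Prop :=
  [/\ W `<=` L, lelek_fan W & lelek_fan ((L `\` W) `|` [set v])].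

Definition retraction (X Y : set T) (r : T -> T) : Prop :=
  [/\ {within X, continuous r}, r @` X `<=` Y & forall y, Y y -> r y = y].

End Fans.

Definition cantor_approx (R : realType) : nat -> set R :=
  fix ca (n : nat) : set R :=
  match n with
  | 0 => `[0, 1]%classic
  | n.+1 => ((fun x => x / 3) @` ca n) `|`
            ((fun x => (x + 2) / 3) @` ca n)
  end.

Definition cantor_set (R : realType) : set R :=
  \bigcap_(n in [set: nat]) @cantor_approx R n.

(* union of segments from (1/2, 0) to (c, 1), c in the Cantor set *)
Definition cantor_fan_model (R : realType) : set (R * R) :=
  [set p | exists c t, [/\ @cantor_set R c, t \in `[0, 1]%R &
            p = ((1 - t) * 2^-1 + t * c, t)]].

Definition cantor_fan (R : realType) (T : pseudoMetricType R) (C : set T) : Prop :=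
  homeomorphic (@cantor_fan_model R) C.

(* Main.v *)
Require Import Defs.
From HB Require Import structures.
From mathcomp Require Import all_boot all_order all_algebra.
From mathcomp Require Import all_classical all_reals.
From mathcomp Require Import topology normedtype.
From mathcomp Require Import ring lra.
Import Order.TTheory GRing.Theory Num.Theory.
Import numFieldNormedType.Exports.
Local Open Scope classical_set_scope.
Local Open Scope ring_scope.
Section Cant.
Variable R : realType.

Lemma ca01 n (c : R) : @cantor_approx R n c -> 0 <= c <= 1.
Proof.
elim: n c => [|n IH] c /=; first by rewrite in_itv.
case=> -[x /IH /andP[x0 x1] <-].
  apply/andP; split; lra.
apply/andP; split; lra.
Qed.

Lemma ca_noint n (c1 c2 : R) : c1 < c2 ->
  (forall c, c1 <= c <= c2 -> @cantor_approx R n c) -> (c2 - c1) * 3^+n <= 1.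
Proof.
elim: n c1 c2 => [|n IH] c1 c2 c12 H.
  have /ca01/andP[? ?] := H c1 ltac:(apply/andP; split; lra).
  have /ca01/andP[? ?] := H c2 ltac:(apply/andP; split; lra).
  rewrite expr0 mulr1; lra.
have [c2l|c2g] := ltP c2 (2/3).
  have : (3 * c2 - 3 * c1) * 3 ^+ n <= 1.
    apply: IH; first lra.
    move=> d /andP[d1 d2]; have /= [] := H (d / 3) ltac:(apply/andP; split; lra).
      by case=> x xA xd; rewrite -[d](_ : x = d) //; lra.
    by case=> x /ca01 /andP[? ?] ?; lra.
  by rewrite exprS; lra.
have [c1g|c1l] := ltP (1/3) c1.
  have : ((3 * c2 - 2) - (3 * c1 - 2)) * 3 ^+ n <= 1.
    apply: IH; first lra.
    move=> d /andP[d1 d2]; have /= [] := H ((d + 2) / 3) ltac:(apply/andP; split; lra).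
      by case=> x /ca01 /andP[? ?] ?; lra.
    by case=> x xA xd; rewrite -[d](_ : x = d) //; lra.
  by rewrite exprS; lra.
have /= [] := H (1/2) ltac:(apply/andP; split; lra).
  by case=> x /ca01 /andP[? ?] ?; lra.
by case=> x /ca01 /andP[? ?] ?; lra.
Qed.


Lemma cantor_noint (c1 c2 : R) : c1 < c2 ->
  ~ (forall c, c1 <= c <= c2 -> @cantor_set R c).
Proof.
move=> c12 H.
pose n := (Num.Def.truncn ((c2 - c1)^-1)).+1.
have h1 : (c2 - c1)^-1 < n%:R by apply: truncnS_gt.
have h2 : (n%:R : R) <= 3 ^+ n.
  have := ltn_expl n (isT : (1 < 3)%N); rewrite -(ltr_nat R) natrX => /ltW.
  by [].
have := @ca_noint n c1 c2 c12 (fun c hc => H c hc n I).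
have d0 : 0 < c2 - c1 by lra.
have : 1 < (c2 - c1) * n%:R.
  have e : (c2 - c1) * (c2 - c1)^-1 = 1 by rewrite divff // gt_eqF.
  nra.
nra.
Qed.

Lemma cantor_conn (S : set R) x y : connected S -> S `<=` @cantor_set R ->
  S x -> S y -> x = y.
Proof.
move=> /connected_intervalP iS SC Sx Sy.
have gen : forall a b, S a -> S b -> a < b -> False.
  move=> a b Sa Sb ab.
  exact: (@cantor_noint a b ab (fun c hc => SC _ (iS a b Sa Sb c hc))).
have [xy|yx|//] := ltgtP x y; first by case: (gen _ _ Sx Sy xy).
by case: (gen _ _ Sy Sx yx).
Qed.


Definition Pm (c t : R) : R * R := ((1 - t) * 2^-1 + t * c, t).
Definition lam (p : R * R) : R := (p.1 - (1 - p.2) * 2^-1) / p.2.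
Definition top0 : R * R := (2^-1, 0).

Lemma lamP c t : t != 0 -> lam (Pm c t) = c.
Proof. by move=> t0; rewrite /lam /Pm /=; field. Qed.

Lemma Pm_inj c c' t t' : Pm c t = Pm c' t' -> t = t' /\ (t != 0 -> c = c').
Proof.
move=> e; have e2 : t = t' by move: e => [].
split=> // t0; by rewrite -(lamP c t t0) e -e2 (lamP c' t t0).
Qed.

Lemma MPm c t : @cantor_set R c -> 0 <= t <= 1 -> @cantor_fan_model R (Pm c t).
Proof. by move=> cc t01; exists c, t; split => //; rewrite in_itv. Qed.

Lemma Mleg p : @cantor_fan_model R p -> p.2 != 0 ->
  [/\ p = Pm (lam p) p.2, @cantor_set R (lam p) & 0 < p.2 <= 1].
Proof.
move=> [c [t [cc]]]; rewrite in_itv /= => /andP[t0 t1] -> /= tn0.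
have -> : lam ((1 - t) * 2^-1 + t * c, t) = c by apply: (lamP c t tn0).
split => //; apply/andP; split => //; rewrite lt0r tn0 //.
Qed.

Lemma Mtop p : @cantor_fan_model R p -> p.2 = 0 -> p = top0.
Proof.
by move=> [c [t [cc _ ->]]] /= ->; rewrite /top0 subr0 mul1r mul0r addr0.
Qed.

Lemma lam_cont p : p.2 != 0 -> {for p, continuous lam}.
Proof.
move=> p2; apply: cvgM.
  apply: cvgB; first exact: cvg_fst.
  apply: cvgM; last exact: cvg_cst.
  apply: cvgB; [exact: cvg_cst | exact: cvg_snd].
by apply: cvgV => //; exact: cvg_snd.
Qed.

Lemma Pm_cont : continuous (fun ct : R * R => Pm ct.1 ct.2).
Proof.
move=> ct; rewrite /Pm; apply: (@cvg_pair _ _ _ _ (nbhs _) (nbhs _)).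
  2: exact: cvg_snd.
apply: cvgD.
  apply: cvgM; last exact: cvg_cst.
  apply: cvgB; [exact: cvg_cst | exact: cvg_snd].
by apply: cvgM; [exact: cvg_snd | exact: cvg_fst].
Qed.


Lemma core (D : set (R * R)) : connected D -> D `<=` @cantor_fan_model R ->
  ~ D top0 -> forall p, D p ->
  [/\ forall z, D z -> lam z = lam p,
      forall z, D z -> z = Pm (lam p) z.2 /\ 0 < z.2 &
      forall q t, D q -> p.2 <= t <= q.2 -> D (Pm (lam p) t)].
Proof.
move=> cD DM Dtop p Dp.
have nz : forall z, D z -> z.2 != 0.
  move=> z Dz; apply/negP => /eqP z0; apply: Dtop.
  by rewrite -(Mtop _ (DM _ Dz) z0).
have lamc : forall z, D z -> lam z = lam p.
  move=> z Dz; apply: (@cantor_conn (lam @` D)).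
  - apply: connected_continuous_connected => //.
    apply: continuous_in_subspaceT => w /set_mem Dw; exact: lam_cont (nz w Dw).
  - by move=> _ [w Dw <-]; have [] := Mleg _ (DM _ Dw) (nz _ Dw).
  - by exists z.
  - by exists p.
have zP : forall z, D z -> z = Pm (lam p) z.2 /\ 0 < z.2.
  move=> z Dz; have [e _ /andP[z0 _]] := Mleg _ (DM _ Dz) (nz _ Dz).
  by rewrite -(lamc z Dz); split.
split => // q t Dq /andP[pt tq].
have : is_interval (snd @` D).
  apply/connected_intervalP; apply: connected_continuous_connected => //.
  apply: continuous_subspaceT => w; exact: cvg_snd.
move=> /(_ p.2 q.2 (ex_intro2 _ _ p Dp erefl) (ex_intro2 _ _ q Dq erefl) t).
rewrite pt tq => /(_ isT) [z Dz <-].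
by rewrite -(zP z Dz).1.
Qed.

End Cant.

Section Topo.

Lemma wcont {S U : topologicalType} {A : set S} {f : S -> U} {x} :
  {within A, continuous f} -> A x -> forall V, nbhs (f x) V ->
  \forall y \near x, A y -> V (f y).
Proof.
move=> /subspace_continuousP fc Ax V nV.
by have := fc x Ax V nV.
Qed.

Lemma wcomp {S U Y : topologicalType} {A : set S} {B : set U}
  {f : S -> U} {g : U -> Y} :
  {within A, continuous f} -> {within B, continuous g} ->
  (forall x, A x -> B (f x)) -> {within A, continuous (g \o f)}.
Proof.
move=> fc gc AB; apply/subspace_continuousP => x Ax V nV.
have := wcont gc (AB x Ax) _ nV => nW.
have := wcont fc Ax _ nW.
rewrite /= nbhs_simpl; apply: filterS => y /= hy Ay.
exact: (hy Ay (AB y Ay)).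
Qed.

End Topo.
Arguments Pm {R}.
Arguments lam {R}.
Arguments MPm {R c t}.
Arguments Mleg {R p}.
Arguments Mtop {R p}.
Arguments core {R D}.
Arguments Pm_inj {R c c' t t'}.
Lemma cantor0 (R : realType) : @cantor_set R 0.
Proof.
move=> n _; elim: n => [|n IH] /=; first by rewrite in_itv /= lexx ler01.
by left; exists 0 => //; rewrite mul0r.
Qed.
Lemma Mtop0 (R : realType) : @cantor_fan_model R (top0 R).
Proof.
exists 0, 0; split; first exact: cantor0.
  by rewrite in_itv /= lexx ler01.
by rewrite /top0; congr (_, _); lra.
Qed.
Lemma nbhsR (R : realType) (t eps : R) : 0 < eps -> nbhs t [set y | `|y - t| < eps].
Proof.
move=> e0; have := nbhsx_ballx t eps e0; apply: filterS => y.
by rewrite /ball /= distrC.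
Qed.

Lemma nbhs_snd (R : realType) (p : R * R) eps : 0 < eps ->
  nbhs p [set q | `|q.2 - p.2| < eps].
Proof.
move=> e0; exact: (@cvg_snd _ _ (nbhs p.1) (nbhs p.2) _ _ (@nbhsR R p.2 eps e0)).
Qed.

Lemma nbhs_lam (R : realType) (p : R * R) eps : 0 < eps -> p.2 != 0 ->
  nbhs p [set q | `|lam q - lam p| < eps].
Proof.
move=> e0 p0; exact: (@lam_cont R p p0 _ (@nbhsR R (lam p) eps e0)).
Qed.

Lemma aff01 (R : realType) (a b s : R) : a < b -> 0 <= s <= 1 ->
  a <= a + s * (b - a) <= b.
Proof.
move=> ab /andP[s0 s1].
have h1 : 0 <= s * (b - a) by apply: mulr_ge0; lra.
have h2 : s * (b - a) <= 1 * (b - a) by apply: ler_wpM2r; lra.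
apply/andP; split; lra.
Qed.

Arguments nbhsR {R}.
Arguments nbhs_snd {R}.
Arguments nbhs_lam {R}.

Lemma Pmt_cont (R : realType) (c : R) : continuous (fun t : R => Pm c t).
Proof.
move=> t; rewrite /Pm; apply: (@cvg_pair _ _ _ _ (nbhs _) (nbhs _)); last exact: cvg_id.
apply: cvgD; first by apply: cvgM; [apply: cvgB; [exact: cvg_cst|exact: cvg_id]|exact: cvg_cst].
by apply: cvgM; [exact: cvg_id|exact: cvg_cst].
Qed.

Section Main.
Variable R : realType.
Variable T : pseudoMetricType R.
Variables (K C : set T) (h : R * R -> T) (g : T -> R * R).
Hypothesis hM : homeo_sets (@cantor_fan_model R) C h g.
Hypothesis KC : K `<=` C.
Local Notation M := (@cantor_fan_model R).

Lemma ghK {p} : M p -> g (h p) = p.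
Proof. by case: hM => _ _ _ _ [+ _]; apply. Qed.
Lemma hgK {z} : C z -> h (g z) = z.
Proof. by case: hM => _ _ _ _ [_ +]; apply. Qed.
Lemma gM {z} : C z -> M (g z).
Proof. by move=> Cz; case: hM => _ _ _ gCM _; apply: gCM; exists z. Qed.
Lemma hC {p} : M p -> C (h p).
Proof. by move=> Mp; case: hM => _ _ hMC _ _; apply: hMC; exists p. Qed.
Lemma hcont : {within M, continuous h}.
Proof. by case: hM. Qed.
Lemma gcont : {within C, continuous g}.
Proof. by case: hM. Qed.

Lemma itv01 (s : R) : (`[0, 1]%classic : set R) s <-> 0 <= s <= 1.
Proof. by rewrite /= in_itv. Qed.

Lemma seg_ex A y0 y1 : A `<=` K -> arc_from A y0 y1 ->
  exists c0 al be, [/\ @cantor_set R c0, 0 < al, al < be, be <= 1 &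
    forall t, al <= t <= be -> K (h (Pm c0 t))].
Proof.
move=> AK [f1 [g1 [[cf1 cg1 f1A g1A [g1f1 f1g1]] _]]].
pose phi := g \o f1.
have f1C : forall s, 0 <= s <= 1 -> C (f1 s).
  by move=> s s01; apply/KC/AK/f1A; exists s => //; apply/itv01.
have phic := wcomp cf1 gcont (fun s hs => f1C s (proj1 (itv01 s) hs)).
have phiinj : forall s s', 0 <= s <= 1 -> 0 <= s' <= 1 -> phi s = phi s' -> s = s'.
  move=> s s' hs hs' e.
  have : f1 s = f1 s' by rewrite -(hgK (f1C _ hs)) -(hgK (f1C _ hs')) /phi /= in e *; rewrite e.
  by move=> e2; rewrite -(g1f1 s) ?itv01 // -(g1f1 s') ?itv01 // e2.
have [a [b [a0 ab b1 atop]]] : exists a b, [/\ 0 <= a, a < b, b <= 1 &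
    forall s, a <= s <= b -> phi s <> top0 R].
  case: (pselect (exists s0, 0 <= s0 <= 1 /\ phi s0 = top0 R)).
    move=> [s0 [hs0 e0]].
    case: (ltP s0 (1/2)) => hs.
      exists (3/4), 1; split; [lra|lra|lra|] => s hs' e.
      have := phiinj s s0 ltac:(apply/andP; lra) hs0 ltac:(by rewrite e e0).
      lra.
    exists 0, (1/4); split; [lra|lra|lra|] => s hs' e.
    have := phiinj s s0 ltac:(apply/andP; lra) hs0 ltac:(by rewrite e e0).
    lra.
  move=> nex; exists 0, 1; split; [lra|lra|lra|] => s hs e; apply: nex.
  by exists s.
have sub : `[a, b]%classic `<=` `[0, 1]%classic.
  by move=> s /=; rewrite !in_itv /= => /andP[? ?]; apply/andP; split; lra.
pose D := phi @` `[a, b]%classic.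
have cD : connected D.
  apply: connected_continuous_connected; last exact: continuous_subspaceW sub phic.
  by apply/connected_intervalP; exact: interval_is_interval.
have DM : D `<=` M.
  move=> _ [s hs <-]; apply: gM; apply: f1C; exact/itv01/sub.
have Dtop : ~ D (top0 R).
  move=> [s hs e]; apply: (atop s) => //; by move: hs; rewrite /= in_itv.
have key : forall u w, D u -> D w -> u.2 < w.2 ->
    exists c0 al be, [/\ @cantor_set R c0, 0 < al, al < be, be <= 1 &
    forall t, al <= t <= be -> K (h (Pm c0 t))].
  move=> u w Du Dw uw; have [lamc zP segD] := @core R D cD DM Dtop u Du.
  have [_ u0] := zP u Du; have [_ w0] := zP w Dw.
  have [_ cu _] := @Mleg R _ (DM u Du) (lt0r_neq0 u0).
  have [_ _ /andP[_ w1]] := @Mleg R _ (DM w Dw) (lt0r_neq0 w0).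
  exists (lam u), u.2, w.2; split => // t ht.
  have [s hs e] := segD w t Dw ht.
  have hs01 : 0 <= s <= 1 by have := sub s hs; rewrite /= in_itv.
  rewrite -e /phi /= (hgK (f1C _ hs01)); apply/AK/f1A; exists s => //.
have Da : D (phi a) by exists a => //=; rewrite in_itv /= lexx; apply/andP; split; lra.
have Db : D (phi b) by exists b => //=; rewrite in_itv /= lexx; apply/andP; split; lra.
have [lamc zP _] := @core R D cD DM Dtop _ Da.
case: (ltgtP (phi a).2 (phi b).2) => hab.
  exact: (key _ _ Da Db hab).
  exact: (key _ _ Db Da hab).
exfalso.
have : phi a = phi b by rewrite (zP _ Da).1 (zP _ Db).1 hab.
move/phiinj; move=> /(_ ltac:(apply/andP; lra) ltac:(apply/andP; lra)); lra.
Qed.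


Variables (L W L' : set T) (v : T) (r : T -> T).
Hypothesis hKeq : K = L' `&` W.
Hypothesis CW : C `<=` W.
Hypothesis WL : W `<=` L.
Hypothesis L'L : L' `<=` L.
Hypothesis cB : closed ((L `\` W) `|` [set v]).
Hypothesis hT : hausdorff_space T.
Hypothesis rc : {within L, continuous r}.
Hypothesis rL : forall y, L y -> L' (r y).
Hypothesis rid : forall y, L' y -> r y = y.

Lemma nearF2 c0 t S : @cantor_set R c0 -> 0 <= t <= 1 ->
  nbhs (r (h (Pm c0 t))) S ->
  exists Q1 Q2, [/\ nbhs c0 Q1, nbhs t Q2 &
    forall c t', Q1 c -> Q2 t' -> @cantor_set R c -> 0 <= t' <= 1 ->
      S (r (h (Pm c t')))].
Proof.
move=> cc t01 nS.
have Mz := MPm cc t01.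
have Lz : L (h (Pm c0 t)) by apply/WL/CW/hC.
have S1 := wcont rc Lz S nS.
have S2 := wcont hcont Mz _ S1.
have S3 := @Pm_cont R (c0, t) _ S2.
case: S3 => -[Q1 Q2] /= [nQ1 nQ2] sQ.
exists Q1, Q2; split => // c t' Q1c Q2t' cc' t01'.
have := sQ (c, t') (conj Q1c Q2t') (MPm cc' t01').
apply; apply/WL/CW/hC; exact: MPm.
Qed.


Lemma endpoint_contra ce a b te : @cantor_set R ce -> 0 < a -> a < te -> te < b ->
  b <= 1 -> (forall t, a <= t <= b -> K (h (Pm ce t))) ->
  end_points K (h (Pm ce te)) -> False.
Proof.
move=> cce a0 ate teb b1 Kseg [Ke Eend].
have Mt : forall t, a <= t <= b -> M (Pm ce t).
  by move=> t /andP[? ?]; apply: MPm => //; apply/andP; split; lra.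
pose A := (fun t => h (Pm ce t)) @` `[a, b]%classic.
have AK : A `<=` K by move=> _ [t ht <-]; apply: Kseg; move: ht; rewrite /= in_itv.
have AC : A `<=` C by move=> z /AK /KC.
have ba0 : b - a != 0 by apply: lt0r_neq0; lra.
pose f := h \o (fun s => Pm ce (a + s * (b - a))).
pose g' := (fun p : R * R => (p.2 - a) / (b - a)) \o g.
have affc : continuous (fun s : R => Pm ce (a + s * (b - a))).
  move=> s; apply: (@continuous_comp _ _ _ (fun s : R => a + s * (b - a))); last exact: Pmt_cont.
  by apply: cvgD; [exact: cvg_cst | apply: cvgM; [exact: cvg_id | exact: cvg_cst]].
have sndc : continuous (fun p : R * R => (p.2 - a) / (b - a)).
  by move=> p; apply: cvgM; [apply: cvgB; [exact: cvg_snd | exact: cvg_cst] | exact: cvg_cst].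
have harc : arc_from A (h (Pm ce a)) (h (Pm ce b)).
  exists f, g'; split; [split|].
  - apply: (wcomp (continuous_subspaceT affc) hcont) => s; rewrite /= in_itv => hs.
    by apply: Mt; apply: aff01 => //; lra.
  - exact: (wcomp (continuous_subspaceW AC gcont) (continuous_subspaceT (A := setT) sndc)).
  - move=> _ [s hs <-]; exists (a + s * (b - a)) => //.
    by move: hs; rewrite /= !in_itv /= => hs; apply: aff01 => //; lra.
  - move=> _ [_ [t ht <-] <-]; move: ht; rewrite /= !in_itv /= => /andP[t0 t1].
    rewrite /g' /= ghK; last by apply: Mt; apply/andP.
    rewrite /= divr_ge0 ?subr_ge0 ?ler_pdivrMr ?mul1r; [|lra|lra|lra].
    by apply: lerB.
  - split.
      move=> s hs; rewrite /g' /f /= ghK /=; first by field.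
      by apply: Mt; move: hs; rewrite /= in_itv /= => hs; apply: aff01 => //; lra.
    move=> _ [t ht <-]; rewrite /g' /f /= ghK /=; last by apply: Mt; move: ht; rewrite /= in_itv.
    by congr (h (Pm ce _)); field.
  by rewrite /f /= mul0r addr0 mul1r; split => //; congr (h (Pm ce _)); ring.
have Ae : A (h (Pm ce te)) by exists te => //; rewrite /= in_itv /=; apply/andP; split; lra.
have [y [f2 [g2 [[cf2 cg2 f2A g2A [g2f2 f2g2]] [f20 _]]]]] :=
  Eend A AK (ex_intro _ _ (ex_intro _ _ harc)) Ae.
have f2in : forall s, 0 <= s <= 1 -> A (f2 s).
  by move=> s hs; apply: f2A; exists s => //; rewrite /= in_itv.
have sub01 : (`]0, 1]%classic : set R) `<=` `[0, 1]%classic.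
  by move=> s; rewrite /= !in_itv /= => /andP[? ?]; apply/andP; split; lra.
pose A' := f2 @` (`]0, 1]%classic : set R).
have cA' : connected A'.
  apply: connected_continuous_connected; last exact: continuous_subspaceW sub01 cf2.
  by apply/connected_intervalP; exact: interval_is_interval.
have A'A : A' `<=` A.
  by move=> _ [s hs <-]; apply: f2in; move: (sub01 s hs); rewrite /= in_itv.
pose Hm := (fun z => (g z).2) @` A'.
have iH : is_interval Hm.
  apply/connected_intervalP; apply: connected_continuous_connected cA' _.
  have sc : continuous (fun p : R * R => p.2) by move=> p; exact: cvg_snd.
  exact: (wcomp (continuous_subspaceW (fun z hz => AC z (A'A z hz)) gcont)
            (continuous_subspaceT (A := setT) sc)).
have inA' : forall t, a <= t <= b -> t != te -> Hm t.
  move=> t ht tne; exists (h (Pm ce t)); last by rewrite ghK //; exact: Mt.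
  have Az : A (h (Pm ce t)) by exists t => //; rewrite /= in_itv.
  have g2z : `[0, 1]%classic (g2 (h (Pm ce t))) by apply: g2A; exists (h (Pm ce t)).
  exists (g2 (h (Pm ce t))); last exact: f2g2.
  move: g2z; rewrite /= !in_itv /= => /andP[z0 z1]; rewrite z1 andbT lt0r z0 andbT.
  apply/negP => /eqP g0.
  have : g (h (Pm ce t)) = g (h (Pm ce te)) by rewrite -(f2g2 _ Az) g0 f20.
  have hte : a <= te <= b by apply/andP; split; lra.
  rewrite (ghK (Mt t ht)) (ghK (Mt te hte)).
  by move/Pm_inj => [tt _]; rewrite tt eqxx in tne.
have Ha : Hm a by apply: inA'; [apply/andP; split; lra | by rewrite (lt_eqF ate)].
have Hb : Hm b by apply: inA'; [apply/andP; split; lra | by rewrite (gt_eqF teb)].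
have := iH a b Ha Hb te ltac:(apply/andP; split; lra).
move=> [_ [s hs <-]].
have [t ht et] : A (f2 s) by apply: A'A; exists s.
move: ht; rewrite /= in_itv /= => ht.
rewrite -et ghK ?[(Pm ce t).2]/= ; last exact: Mt.
move=> tte; rewrite tte in et.
have s01 : 0 <= s <= 1 by move: (sub01 s hs); rewrite /= in_itv.
have : g2 (f2 s) = g2 (f2 0) by rewrite -et f20.
rewrite !g2f2 ?itv01 //; last by apply/andP; split; lra.
by move=> s0; move: hs; rewrite /= in_itv /= s0 ltxx.
Qed.

Lemma contra c0 al be : @cantor_set R c0 -> 0 < al -> al < be -> be <= 1 ->
  (forall t, al <= t <= be -> K (h (Pm c0 t))) ->
  (forall t, al <= t <= be -> h (Pm c0 t) <> v) ->
  closure (end_points K) = K -> False.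
Proof.
move=> cc0 al0 albe be1 segK segv clE.
pose Bd := ((L `\` W) `|` [set v]) `|` [set h (top0 R)].
have cBd : closed Bd := closedU cB (@accessible_closed_set1 _ (hausdorff_accessible hT) (h (top0 R))).
have oO : open (~` Bd) := closed_openC cBd.
have KL' : K `<=` L' by rewrite hKeq => y [].
have KW : K `<=` W by rewrite hKeq => y [].
have inK : forall y, L y -> ~ Bd (r y) -> K (r y).
  move=> y Ly nB; rewrite hKeq; split; first exact: rL.
  apply: contrapT => nW; apply: nB; left; left; split => //.
  exact/L'L/rL.
have t01 : forall t, al <= t <= be -> 0 <= t <= 1.
  by move=> t /andP[? ?]; apply/andP; split; lra.
have notB : forall t, al <= t <= be -> ~ Bd (h (Pm c0 t)).
  move=> t ht [[[_ nW]|ev]|e].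
  - by apply/nW/KW/segK.
  - exact: (segv t ht).
  - have : g (h (Pm c0 t)) = g (h (top0 R)) by rewrite e.
    rewrite (ghK (MPm cc0 (t01 t ht))) (ghK (Mtop0 R)).
    by move=> [_ t0]; move: ht; rewrite t0; lra.
have tube : \forall c \near within (@cantor_set R) (nbhs c0),
    forall t, al <= t <= be -> ~ Bd (r (h (Pm c t))).
  have cov := (near_covering_withinP `[al, be]%classic).2
     ((compact_near_coveringP _).1 (@segment_compact R al be)).
  have := cov R (within (@cantor_set R) (nbhs c0)) (fun c t => ~ Bd (r (h (Pm c t)))) _.
  move=> H; apply: filterS (H _ _) => [c hc t ht|].
    by apply: hc; rewrite /= in_itv.
  move=> t; rewrite /= in_itv => ht.
  have rz : r (h (Pm c0 t)) = h (Pm c0 t) := rid _ (KL' _ (segK t ht)).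
  have nO : nbhs (r (h (Pm c0 t))) (~` Bd).
    by rewrite rz; apply: open_nbhs_nbhs; split => //; exact: notB.
  have [Q1 [Q2 [nQ1 nQ2 hQ]]] := @nearF2 c0 t _ cc0 (t01 t ht) nO.
  rewrite /prop_near2 /=.
  exists (Q2, [set c | @cantor_set R c /\ Q1 c]).
    split => //=; rewrite /within; apply: filterS nQ1 => c Q1c cc //.
  move=> [t' c] /= [Q2t' [cc Q1c]]; rewrite in_itv /= => ht'.
  by apply: hQ => //; apply: t01.
have endn : forall t, al <= t <= be -> forall eps, 0 < eps ->
    \forall c \near within (@cantor_set R) (nbhs c0),
      ~ Bd (r (h (Pm c t))) -> `|(g (r (h (Pm c t)))).2 - t| < eps.
  move=> t ht eps e0.
  have rz := rid _ (KL' _ (segK t ht)).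
  have Cz : C (r (h (Pm c0 t))) by rewrite rz; exact/KC/segK.
  have nS : nbhs (g (r (h (Pm c0 t)))) [set q | `|q.2 - t| < eps].
    rewrite rz (ghK (MPm cc0 (t01 t ht))); exact: (nbhs_snd (Pm c0 t) eps e0).
  have S1 := wcont gcont Cz _ nS.
  have [Q1 [Q2 [nQ1 nQ2 hQ]]] := @nearF2 c0 t _ cc0 (t01 t ht) S1.
  rewrite /within; apply: filterS nQ1 => c Q1c cc nB.
  have Lh : L (h (Pm c t)) by apply/WL/CW/hC/MPm => //; exact: t01.
  apply: (hQ c t Q1c (nbhs_singleton nQ2) cc (t01 t ht)).
  exact/KC/inK.
pose d := (be - al) / 4.
have d0 : 0 < d by rewrite /d; lra.
have hal : al <= al <= be by apply/andP; lra.
have hbe : al <= be <= be by apply/andP; lra.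
have F3 : \forall c \near within (@cantor_set R) (nbhs c0),
    (forall t, al <= t <= be -> ~ Bd (r (h (Pm c t)))) /\
    ((~ Bd (r (h (Pm c al))) -> `|(g (r (h (Pm c al)))).2 - al| < d) /\
     (~ Bd (r (h (Pm c be))) -> `|(g (r (h (Pm c be)))).2 - be| < d)).
  near=> c; split; first by near: c; exact: tube.
  by split; near: c; [exact: (endn al hal d d0)|exact: (endn be hbe d d0)].
have [del del0 hdel] := (nbhs_ballP _ _).1 F3.
pose tm := (al + be) / 2.
have htm : al <= tm <= be by apply/andP; rewrite /tm; lra.
pose x := h (Pm c0 tm).
have Kx : K x := segK tm htm.
have Cx : C x := KC _ Kx.
have gx : g x = Pm c0 tm := ghK (MPm cc0 (t01 tm htm)).
have tm0 : tm != 0 by apply: lt0r_neq0; rewrite /tm; lra.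
have nx : nbhs (g x) [set q | `|lam q - lam (g x)| < del /\ `|q.2 - (g x).2| < d].
  by apply: filterI; [apply: nbhs_lam => //; rewrite gx | exact: nbhs_snd d0].
have Sx := wcont gcont Cx _ nx.
move: Kx; rewrite -{1}clE => /(_ _ Sx) [e [Ee Se]].
have Ke : K e := Ee.1.
have Ce : C e := KC _ Ke.
have [hl hh] := Se Ce.
move: hl hh; rewrite gx lamP //= => hl; rewrite ltr_norml => /andP[hh1 hh2].
rewrite /tm /d in hh1 hh2.
have te0 : (g e).2 != 0 by apply: lt0r_neq0; lra.
have [pe_eq cce /andP[_ te1]] := Mleg (gM Ce) te0.
pose ce := lam (g e); pose te := (g e).2.
have eE : h (Pm ce te) = e by rewrite -pe_eq hgK.
have [tce [ena enb]] := hdel ce ltac:(rewrite /ball /= distrC //) cce.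
have itvE : forall t, `[al, be]%classic t -> al <= t <= be by move=> t; rewrite /= in_itv.
have Lh : forall t, al <= t <= be -> L (h (Pm ce t)).
  by move=> t ht; apply/WL/CW/hC/MPm => //; exact: t01.
have Ch : forall t, al <= t <= be -> C (r (h (Pm ce t))).
  by move=> t ht; apply/KC/inK; [exact: Lh| exact: tce].
pose phi2 := g \o (r \o (h \o (fun t => Pm ce t))).
have w1 := wcomp (continuous_subspaceT (A := `[al, be]%classic) (@Pmt_cont R ce)) hcont
   (fun t ht => MPm cce (t01 t (itvE t ht))).
have w2 := wcomp w1 rc (fun t ht => Lh t (itvE t ht)).
have w3 := wcomp w2 gcont (fun t ht => Ch t (itvE t ht)).
pose D := phi2 @` `[al, be]%classic.
have cD : connected D.
  apply: connected_continuous_connected w3.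
  by apply/connected_intervalP; exact: interval_is_interval.
have DM : D `<=` M by move=> _ [s hs <-]; apply: gM; exact: (Ch s (itvE s hs)).
have Dtop : ~ D (top0 R).
  move=> [s hs es]; have hs' := itvE s hs.
  apply: (tce s hs'); right; rewrite -(hgK (Ch s hs')).
  by rewrite /phi2 /= in es; rewrite es.
have hte : al <= te <= be by apply/andP; rewrite /te; lra.
have Dpe : D (g e).
  exists te; first by rewrite /= in_itv.
  by rewrite /phi2 /= eE (rid _ (KL' _ Ke)).
have Dpa : D (phi2 al) by exists al => //; rewrite /= in_itv.
have Dpb : D (phi2 be) by exists be => //; rewrite /= in_itv.
have [lamc zP _] := core cD DM Dtop _ Dpe.
have lpa : lam (phi2 al) = ce := lamc _ Dpa.
have [_ _ segD] := core cD DM Dtop _ Dpa.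
have := ena (tce al hal); rewrite ltr_norml => /andP[ha1 ha2].
have := enb (tce be hbe); rewrite ltr_norml => /andP[hb1 hb2].
rewrite /d in ha1 ha2 hb1 hb2.
have pa0 := (zP _ Dpa).2.
have pb0 := (zP _ Dpb).2.
have [_ _ /andP[_ pb1]] := Mleg (DM _ Dpb) (lt0r_neq0 pb0).
have Kseg : forall t, (phi2 al).2 <= t <= (phi2 be).2 -> K (h (Pm ce t)).
  move=> t ht; have [s hs es] := segD _ t Dpb ht; rewrite lpa in es.
  have hs' := itvE s hs.
  rewrite -es /phi2 /= (hgK (Ch s hs')); exact: inK (Lh s hs') (tce s hs').
apply: (@endpoint_contra ce _ _ te cce pa0 _ _ pb1 Kseg); first by rewrite /te; lra.
  by rewrite /te; lra.
by rewrite eE.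
Unshelve. all: end_near.
Qed.

End Main.

Theorem mainTheorem9 (R : realType) (T : pseudoMetricType R)
  (hT : hausdorff_space T) (L W L' C : set T) (v : T) :
  lelek_fan_top L v ->
  wedge L W v ->
  L' `<=` L -> lelek_fan L' ->
  lelek_fan (L' `&` W) ->
  cantor_fan C -> L' `&` W `<=` C -> C `<=` W ->
  ~ exists r : T -> T, retraction L L' r.
Proof.
move=> _ [WL _ [v2 [[[[[_ [cpt _] _] _] _] _] _ _]]] L'L _ [v1 [_ ram clE]]
  [h [g hM]] KC CW [r [rc rL rid]].
have cB := compact_closed hT cpt.
have rL' : forall y, L y -> L' (r y) by move=> y Ly; apply: rL; exists y.
move: ram => [A1 [A2 [A3 [y1 [y2 [y3 [sub a1 _ _ _]]]]]]].
have A1K : A1 `<=` L' `&` W by move=> z hz; apply: sub; left; left.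
have [c0 [al [be [cc0 al0 albe be1 segK]]]] := @seg_ex R T _ C h g hM KC _ _ _ A1K a1.
have Mt : forall t, al <= t <= be -> @cantor_fan_model R (Pm c0 t).
  by move=> t /andP[? ?]; apply: MPm => //; apply/andP; split; lra.
have hinj : forall t t', al <= t <= be -> al <= t' <= be ->
    h (Pm c0 t) = h (Pm c0 t') -> t = t'.
  move=> t t' ht ht' e.
  have : g (h (Pm c0 t)) = g (h (Pm c0 t')) by rewrite e.
  by rewrite (@ghK R T C h g hM _ (Mt t ht)) (@ghK R T C h g hM _ (Mt t' ht')) => /Pm_inj [].
pose m1 := al + (be - al) / 3; pose m2 := al + 2 * (be - al) / 3.
have [a [b [ab0 abb ab1 aseg avv]]] : exists a b, [/\ 0 < a, a < b, b <= 1,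
    forall t, a <= t <= b -> (L' `&` W) (h (Pm c0 t)) &
    forall t, a <= t <= b -> h (Pm c0 t) <> v].
  case: (pselect (exists t, al <= t <= m1 /\ h (Pm c0 t) = v)).
    move=> [t0 [ht0 e0]]; exists m2, be; split; rewrite /m2; [lra|lra|lra| |].
      by move=> t /andP[? ?]; apply: segK; apply/andP; split; lra.
    move=> t /andP[? ?] e; move: ht0; rewrite /m1 => /andP[? ?].
    have := hinj t t0 ltac:(apply/andP; split; lra) ltac:(apply/andP; split; lra).
    rewrite e e0 => /(_ erefl); lra.
  move=> nex; exists al, m1; split; rewrite /m1; [lra|lra|lra| |].
    by move=> t /andP[? ?]; apply: segK; apply/andP; split; lra.
  by move=> t ht e; apply: nex; exists t.
exact: (@contra R T _ C h g hM KC L W L' v r erefl CW WL L'L cB hT rc rL' rid c0 a b cc0 ab0 abb ab1 aseg avv clE).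
Qed.
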